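(* Let $\lambda$ be a partition of $n$ and $1\le i\le n$. Let $T$ be the column superstandard tabloid of shape $\lambda$ with start $i$ and $T'$ the column superstandard tabloid of shape $\lambda$ with start $i+1$. Then $\operatorname{charge}(T')\equiv\operatorname{charge}(T)-1\pmod{d_\lambda}$.
   Context: Fix $n\ge1$; $\overline i=i+n\mathbb Z$, $[\overline n]=\{\overline1,\dots,\overline n\}$. A tabloid of shape $\lambda$ is a sequence $(T_1,\dots,T_{\ell(\lambda)})$ of pairwise disjoint subsets of $[\overline n]$ with $|T_r|=\lambda_r$ and union $[\overline n]$ (row 1 highest). The column superstandard tabloid of shape $\lambda$ with start $i$ is obtained by filling the columns of the Young diagram of $\lambda$, left to right and each from top to bottom, with consecutive entries $\overline i,\overline{i+1},\overline{i+2},\dots$, then taking $T_r$ to be the set of entries in row $r$. Broken order: $\overline1<\dots<\overline n$. Local charge: if $\lambda_k=\lambda_{k+1}=m$, list $T_k$ as $\overline{a_1}<\dots<\overline{a_m}$ (broken order); for $t=1,\dots,m$ in turn match $\overline{a_t}$ with the smallest unmatched element of $T_{k+1}$ larger than $\overline{a_t}$ if one exists, otherwise with the smallest unmatched element of $T_{k+1}$; $\operatorname{lch}_k(T)$ is the number of $t$ with $\overline{a_t}$ larger than its match. If $\lambda_k\ne\lambda_{k+1}$, $\operatorname{lch}_k(T)=0$. $\operatorname{charge}(T)=\sum_{k=1}^{\ell(\lambda)-1}k\cdot\operatorname{lch}_k(T)$. $d_\lambda=\gcd(\lambda'_1,\lambda'_2,\dots)$ with $\lambda'$ the conjugate partition.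 *)

(* Defs.v *)
From mathcomp Require Import all_boot.
Set Implicit Arguments. Unset Strict Implicit. Unset Printing Implicit Defensive.

(* Conventions: the residue class  \overline{v+1}  (v = 0..n-1) is encoded by
   the natural number v.  Hence the broken order 1bar < ... < nbar is the usual
   order on nat, and the residue of an integer j >= 1 is encoded by (j - 1) %% n. *)

Definition is_partition (n : nat) (la : seq nat) : bool :=
  [&& sorted geq la, all (fun x => 0 < x) la & sumn la == n].

Definition conj_part (la : seq nat) : seq nat :=
  [seq count (fun x => c < x) la | c <- iota 0 (head 0 la)].

Definition d_la (la : seq nat) : nat := foldr gcdn 0 (conj_part la).

(* A tabloid is encoded as the sequence of its rows T_1, ..., T_l,
   each row a seq of encoded residues. *)
Definition tabloid := seq (seq nat).

(* Column superstandard tabloid of shape la with start i: the cell in row r,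
   column c (0-based) is the p-th cell in column-reading order, where
   p = la'_0 + ... + la'_{c-1} + r, and is filled with the residue of i + p. *)
Definition col_superstd (n : nat) (la : seq nat) (i : nat) : tabloid :=
  [seq [seq (i + (sumn (take c (conj_part la)) + r) - 1) %% n
        | c <- iota 0 (nth 0 la r)]
  | r <- iota 0 (size la)].

(* Greedy matching of the sorted list A (row T_k) into the sorted list B
   (row T_{k+1}): each a is matched with the smallest unmatched b > a if one
   exists, otherwise with the smallest unmatched b; counts the a's that are
   larger than their match. *)
Fixpoint match_count (A B : seq nat) : nat :=
  match A with
  | [::] => 0
  | a :: A' =>
      let b := match [seq x <- B | a < x] with
               | b0 :: _ => b0
               | [::] => head 0 B
               end in
      (b < a) + match_count A' (rem b B)
  end.

(* local charge lch_k (k is 1-based, rows are T_k and T_{k+1}) *)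
Definition lch (la : seq nat) (T : tabloid) (k : nat) : nat :=
  if nth 0 la k.-1 == nth 0 la k then
    match_count (sort leq (nth [::] T k.-1)) (sort leq (nth [::] T k))
  else 0.

Definition charge (la : seq nat) (T : tabloid) : nat :=
  \sum_(1 <= k < size la) k * lch la T k.

(* Main.v *)
Require Import Defs.
From mathcomp Require Import all_boot zify.

Lemma mc_succ (A : seq nat) : match_count A (map succn A) = 0.
Proof. by elim: A => //= a A IH; rewrite ltnSn /= eqxx IH ltnNge leqnSn. Qed.

Lemma mc_wrap (A : seq nat) x : match_count (rcons A x) (0 :: map succn A) = (0 < x).
Proof.
elim: A => [|a A IH] /=; first by rewrite addn0.
by rewrite ltnSn /= eqxx IH ltnNge leqnSn.
Qed.

Lemma sorted_rcons_le (s : seq nat) x : sorted leq s -> all (fun y => y <= x) s ->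
  sorted leq (rcons s x).
Proof.
case: s => [|a s] // Hs Ha.
rewrite /= rcons_path; rewrite /= in Hs; rewrite Hs /=.
have : last a s \in a :: s by apply: mem_last.
by move/(allP Ha).
Qed.

Lemma sort_lemma (n : nat) (X : seq nat) : 0 < n -> all (fun x => x < n) X ->
  count_mem n.-1 X <= 1 ->
  match_count (sort leq X) (sort leq (map (fun x => x.+1 %% n) X))
  = ((n.-1 \in X) && (1 < n)).
Proof.
move=> n0 Hall Hc.
case: (boolP (n.-1 \in X)) => Hin /=.
- set Y := rem n.-1 X.
  have HP := perm_to_rem Hin.
  have HY : all (fun x => x < n.-1) Y.
    apply/allP => y Hy.
    have Hy' : y \in X by apply: (mem_rem Hy).
    have := allP Hall y Hy'.
    case: (ltngtP y n.-1) => //; first by lia.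
    move=> Ey; subst y.
    have : count_mem n.-1 X = (count_mem n.-1 Y).+1.
      by rewrite (permP HP) /= eqxx.
    by rewrite -has_pred1 in Hy; have := has_count (pred1 n.-1) Y; rewrite Hy; lia.
  have E1 : sort leq X = rcons (sort leq Y) n.-1.
    rewrite -[RHS](sorted_sort leq_trans).
    + apply/perm_sortP => //; [exact: leq_total|exact: leq_trans|exact: anti_leq|].
      by rewrite (permPl HP) perm_sym perm_rcons perm_cons perm_sort.
    apply: sorted_rcons_le; first exact: sort_sorted leq_total _.
    apply/allP => y; rewrite mem_sort => Hy; have := allP HY y Hy; lia.
  have E2 : sort leq (map (fun x => x.+1 %% n) X) = 0 :: map succn (sort leq Y).
    rewrite -[RHS](sorted_sort leq_trans).
    + apply/perm_sortP => //; [exact: leq_total|exact: leq_trans|exact: anti_leq|].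
      rewrite (permPl (perm_map (fun x => x.+1 %% n) HP)) /=.
      have -> : (n.-1).+1 %% n = 0 by rewrite prednK // modnn.
      rewrite perm_cons.
      have -> : [seq x.+1 %% n | x <- Y] = map succn Y.
        apply/eq_in_map => y Hy; have := allP HY y Hy => H.
        by rewrite modn_small //; lia.
      by apply: perm_map; rewrite perm_sym perm_sort.
    rewrite /= path_sortedE; last exact: leq_trans.
    rewrite all_map; apply/andP; split; first by apply/allP.
    rewrite sorted_map; exact: sort_sorted leq_total _.
  by rewrite E1 E2 mc_wrap; case: n n0 {Hall Hc HP HY E1 E2 Hin Y}.
- have -> : [seq x.+1 %% n | x <- X] = map succn X.
    apply/eq_in_map => y Hy; have := allP Hall y Hy => H.
    rewrite modn_small //.
    case: (ltngtP y.+1 n) => //; first by lia.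
    by move=> E; move: Hin; rewrite -E /= Hy.
  have -> : sort leq (map succn X) = map succn (sort leq X).
    apply: (@sorted_eq _ leq); [exact: leq_trans|exact: anti_leq| | |].
    + exact: sort_sorted leq_total _.
    + rewrite sorted_map; exact: sort_sorted leq_total _.
    + by rewrite perm_sort perm_map // perm_sym perm_sort.
  exact: mc_succ.
Qed.

Definition Sc la c := sumn (take c (conj_part la)).

Lemma geq_trans : transitive geq.
Proof. by move=> a b c /= H1 H2; exact: leq_trans H2 H1. Qed.

Lemma K1 la c r : sorted geq la -> (c < nth 0 la r) = (r < count (fun x => c < x) la).
Proof.
elim: la r => [|x la IH] r /=; first by rewrite nth_nil.
move=> Hs.
have Hs' : sorted geq la := path_sorted Hs.
have Hall : all (fun y => y <= x) la.
  by move: Hs; rewrite path_sortedE; [case/andP|exact: geq_trans].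
have C0 : x <= c -> count (fun y => c < y) la = 0.
  move=> Hxc; apply/eqP; rewrite -leqn0 leqNgt -has_count; apply/hasPn => y Hy.
  have := allP Hall y Hy; rewrite /= -leqNgt => H; exact: leq_trans H Hxc.
case: r => [|r] /=.
- case: (ltnP c x) => Hcx //=.
  by rewrite C0.
- rewrite IH //; case: (ltnP c x) => Hcx //=.
  by rewrite C0.
Qed.

Lemma nth_mono la r1 r2 : sorted geq la -> r1 <= r2 -> nth 0 la r2 <= nth 0 la r1.
Proof.
move=> Hs Hr; case E: (nth 0 la r2) => [|v] //.
have : v < nth 0 la r2 by rewrite E.
rewrite K1 // => H.
have : r1 < count (fun x => v < x) la by exact: leq_ltn_trans Hr H.
by rewrite -K1.
Qed.

Lemma size_cj la : size (conj_part la) = head 0 la.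
Proof. by rewrite size_map size_iota. Qed.

Lemma nth_cj la c : c < head 0 la -> nth 0 (conj_part la) c = count (fun x => c < x) la.
Proof. by move=> H; rewrite (nth_map 0) ?size_iota // nth_iota. Qed.

Lemma sumn_take s c : sumn (take c s) = \sum_(0 <= k < c) nth 0 s k.
Proof.
elim: s c => [|x s IH] c.
  by rewrite /= big1 // => k _; rewrite nth_nil.
case: c => [|c]; first by rewrite big_geq.
by rewrite big_nat_recl //= IH.
Qed.

Lemma ScS la c : Sc la c.+1 = Sc la c + nth 0 (conj_part la) c.
Proof. by rewrite /Sc !sumn_take big_nat_recr. Qed.

Lemma tele la (phi : nat -> nat) m :
  \sum_(0 <= c < m) \sum_(0 <= r < nth 0 (conj_part la) c) phi (Sc la c + r)
  = \sum_(0 <= q < Sc la m) phi q.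
Proof.
elim: m => [|m IH]; first by rewrite big_geq // /Sc take0 big_geq.
rewrite big_nat_recr //= IH ScS [RHS](@big_cat_nat _ _ _ (Sc la m)) //= ?leq_addr //.
congr (_ + _).
rewrite -{2}(add0n (Sc la m)) big_addn addKn.
by apply: eq_bigr => r _; rewrite addnC.
Qed.

Lemma K2 la (phi : nat -> nat) : sorted geq la ->
  \sum_(0 <= r < size la) \sum_(0 <= c < nth 0 la r) phi (Sc la c + r)
  = \sum_(0 <= q < Sc la (head 0 la)) phi q.
Proof.
move=> Hs; set M := head 0 la.
have HM : forall r, nth 0 la r <= M.
  by move=> r; rewrite /M -nth0; apply: nth_mono.
transitivity (\sum_(0 <= r < size la) \sum_(0 <= c < M)
                 (if c < nth 0 la r then phi (Sc la c + r) else 0)).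
  apply: eq_bigr => r _.
  rewrite (big_nat_widen 0 (nth 0 la r) M) // big_mkcond /=.
  by [].
rewrite (exchange_big_nat _ 0 (size la) 0 M) /=.
rewrite -tele.
apply: eq_big_nat => c /andP [_ HcM].
rewrite nth_cj // [RHS](big_nat_widen 0 _ (size la)) ?count_size // [RHS]big_mkcond /=.
by apply: eq_bigr => r _; rewrite K1.
Qed.

Lemma ScM n la : is_partition n la -> Sc la (head 0 la) = n.
Proof.
case/and3P => Hs Hp /eqP Hn.
have := K2 la (fun _ => 1) Hs.
rewrite sum_nat_const_nat subn0 muln1 => <-.
rewrite -Hn sumnE [RHS](big_nth 0).
by apply: eq_bigr => r _; rewrite sum_nat_const_nat subn0 muln1.
Qed.

Lemma dvd_fold s c : foldr gcdn 0 s %| nth 0 s c.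
Proof.
elim: s c => [|x s IH] c /=; first by rewrite nth_nil dvdn0.
case: c => [|c] /=; first exact: dvdn_gcdl.
exact: dvdn_trans (dvdn_gcdr _ _) (IH c).
Qed.

Lemma d_Sc la c : d_la la %| Sc la c.
Proof. by rewrite /Sc sumn_take; apply: dvdn_sum => k _; apply: dvd_fold. Qed.

Lemma d_n n la : is_partition n la -> d_la la %| n.
Proof. by move=> H; rewrite -(ScM n la H); apply: d_Sc. Qed.

Lemma d_cnt la c : c < head 0 la -> d_la la %| count (fun x => c < x) la.
Proof. by move=> H; rewrite -nth_cj //; apply: dvd_fold. Qed.

Lemma d_L n la : 0 < n -> is_partition n la -> d_la la %| size la.
Proof.
move=> n0 /and3P [Hs Hp /eqP Hn].
case: la Hs Hp Hn => [|x la] Hs Hp Hn; first by move: n0; rewrite -Hn.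
have Hx : 0 < x by case/andP: Hp.
have := d_cnt (x :: la) 0 Hx.
by move: Hp; rewrite all_count => /eqP ->.
Qed.

Lemma d_k n la k : is_partition n la -> 1 <= k < size la ->
  nth 0 la k.-1 != nth 0 la k -> d_la la %| k.
Proof.
move=> /and3P [Hs _ _] /andP [k1 kL] Hne.
have Hle : nth 0 la k <= nth 0 la k.-1 by apply: nth_mono => //; lia.
have Hlt : nth 0 la k < nth 0 la k.-1 by rewrite ltn_neqAle eq_sym Hne.
have H0 : nth 0 la k.-1 <= head 0 la by rewrite -nth0; apply: nth_mono.
set c := nth 0 la k in Hle Hlt.
have -> : k = count (fun x => c < x) la.
  have A := K1 la c k Hs; have B := K1 la c k.-1 Hs.
  rewrite ltnn in A; rewrite Hlt in B.
  move: A B; lia.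
by apply: d_cnt; exact: leq_trans Hlt H0.
Qed.

Definition Rw n la j r := [seq (j + (Sc la c + r) - 1) %% n | c <- iota 0 (nth 0 la r)].

Lemma nth_T n la j r : r < size la -> nth [::] (col_superstd n la j) r = Rw n la j r.
Proof. by move=> H; rewrite /col_superstd (nth_map 0) ?size_iota // nth_iota. Qed.

Lemma count_iota_sum (P : pred nat) m : count P (iota 0 m) = \sum_(0 <= c < m) P c.
Proof.
elim: m => [|m IH]; first by rewrite big_geq.
by rewrite big_nat_recr // -[m.+1]addn1 iotaD count_cat IH /= addn0 add0n.
Qed.

Definition Q n j := if j <= n then n - j else n.-1.

Lemma mod_small2 m n : m < n + n -> m %% n = if m < n then m else m - n.
Proof.
move=> H; case: ifP => H1; first by rewrite modn_small.
have -> : m = (m - n) + n by lia.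
by rewrite modnDr modn_small; lia.
Qed.

Lemma modQ n j q : 0 < n -> 1 <= j <= n.+1 -> q < n ->
  ((j + q - 1) %% n == n.-1) = (q == Q n j).
Proof.
move=> n0 Hj Hq.
rewrite mod_small2; last by lia.
rewrite /Q; case: ifP => H1; case: ifP => H2; apply/eqP/eqP; lia.
Qed.

Lemma sum_single (F : nat -> nat) n q0 : q0 < n ->
  \sum_(0 <= q < n) F q * (q == q0) = F q0.
Proof.
move=> H; rewrite big_mkord (bigD1 (Ordinal H)) //= eqxx muln1 big1 ?addn0 //.
by move=> i; rewrite -val_eqE /= => /negbTE ->; rewrite muln0.
Qed.

Lemma addmod_dvd d x y : d %| y -> x + y = x %[mod d].
Proof. by case/dvdnP => q ->; rewrite addnC modnMDl. Qed.

Lemma sum_congr_mod d m k (F G : nat -> nat) :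
  (forall i, m <= i < k -> F i = G i %[mod d]) ->
  \sum_(m <= i < k) F i = \sum_(m <= i < k) G i %[mod d].
Proof.
move=> H; rewrite -modn_summ -[in RHS]modn_summ; congr (_ %% _).
by apply: eq_big_nat => i Hi; apply: H.
Qed.

Lemma mem_count1 (x : nat) s : count_mem x s <= 1 -> (x \in s : nat) = count_mem x s.
Proof.
move=> H; rewrite -has_pred1 has_count.
by case: (count_mem x s) H => [|[|]].
Qed.

Lemma charge_mod n la j : 1 < n -> is_partition n la -> 1 <= j <= n.+1 ->
  charge la (col_superstd n la j) = (Q n j).+1 %[mod d_la la].
Proof.
move=> n1 Hpart Hj.
have n0 : 0 < n by lia.
have Hs : sorted geq la by case/and3P: Hpart.
set d := d_la la.
set L := size la.
set phi1 := fun q => ((j + q - 1) %% n == n.-1) : nat.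
have HQ : Q n j < n by rewrite /Q; case: ifP; lia.
have Hphi1 : forall q, q < n -> phi1 q = (q == Q n j) by move=> q Hq; rewrite /phi1 modQ.
set b := fun r => count_mem n.-1 (Rw n la j r).
have Hb : forall r, b r = \sum_(0 <= c < nth 0 la r) phi1 (Sc la c + r).
  by move=> r; rewrite /b /Rw count_map count_iota_sum.
have Htot : \sum_(0 <= r < L) b r = 1.
  rewrite (eq_bigr _ (fun r _ => Hb r)) K2 // (ScM n la Hpart).
  rewrite (eq_big_nat _ _ (F2 := fun q => 1 * (q == Q n j))); first exact: sum_single.
  by move=> q /andP [_ Hq]; rewrite mul1n Hphi1.
have Hb1 : forall r, r < L -> b r <= 1.
  move=> r Hr; rewrite -Htot (@big_cat_nat _ _ _ r) //= ?(ltnW Hr) //.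
  by rewrite (big_ltn Hr) addnCA leq_addr.
have S1 : charge la (col_superstd n la j) = \sum_(1 <= k < L) k * b k.-1 %[mod d].
  apply: sum_congr_mod => k /andP [k1 kL].
  rewrite /lch !nth_T //; last by lia.
  case: eqP => Heq.
  - have Hmap : Rw n la j k = map (fun x => x.+1 %% n) (Rw n la j k.-1).
      rewrite /Rw -map_comp -Heq; apply: eq_map => c /=.
      rewrite -[(_ %% n).+1]addn1 modnDml; congr (_ %% _); lia.
    rewrite Hmap sort_lemma //.
    + by rewrite n1 andbT mem_count1 // Hb1 //; lia.
    + by apply/allP => x /mapP [c _ ->]; rewrite ltn_mod.
    + by apply: Hb1; lia.
  - have Hd : d %| k by apply: (d_k n la k Hpart); [lia | apply/eqP].
    rewrite muln0; apply/esym/eqP; rewrite mod0n; apply/eqP.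
    by apply/eqP; rewrite -/(dvdn d _) dvdn_mulr.
rewrite S1.
have Hd : d %| L * b L.-1 by apply: dvdn_mulr; exact: d_L n0 Hpart.
rewrite -(addmod_dvd d (\sum_(1 <= k < L) k * b k.-1) _ Hd).
have L0 : 0 < L by case/and3P: Hpart => _ _ /eqP; rewrite /L; case: (la) => //= E; move: n0; rewrite -E.
have E : \sum_(1 <= k < L.+1) k * b k.-1 = \sum_(1 <= k < L) k * b k.-1 + L * b L.-1
  by rewrite big_nat_recr.
rewrite -E.
rewrite (big_add1 _ _ 0 L.+1) /=.
rewrite (eq_bigr _ (fun r _ => congr1 (muln r.+1) (Hb r))).
rewrite (eq_bigr _ (fun r _ => big_distrr _ _ _)) /=.
have S4 : \sum_(0 <= i < L) \sum_(0 <= c < nth 0 la i) i.+1 * phi1 (Sc la c + i)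
        = \sum_(0 <= i < L) \sum_(0 <= c < nth 0 la i) (Sc la c + i).+1 * phi1 (Sc la c + i)
          %[mod d].
  apply: sum_congr_mod => r _; apply: sum_congr_mod => c _.
  rewrite -addnS mulnDl [Sc la c * _ + _]addnC; symmetry; apply: addmod_dvd.
  by apply: dvdn_mulr; apply: d_Sc.
rewrite S4 (K2 la (fun q => q.+1 * phi1 q)) // (ScM n la Hpart).
rewrite (eq_big_nat _ _ (F2 := fun q => q.+1 * (q == Q n j))); first by rewrite sum_single.
by move=> q /andP [_ Hq]; rewrite Hphi1.
Qed.

Theorem lemma8p5 (n : nat) (la : seq nat) (i : nat) :
  0 < n -> is_partition n la -> 1 <= i <= n ->
  charge la (col_superstd n la i.+1) + 1 = charge la (col_superstd n la i)
    %[mod d_la la].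
Proof.
move=> n0 Hp Hi.
have Hdn := d_n n la Hp.
case: (ltnP 1 n) => n1; last first.
  have En : n = 1 by lia.
  by move: Hdn; rewrite En dvdn1 => /eqP ->; rewrite !modn1.
rewrite -modnDml charge_mod //; last by lia.
rewrite modnDml charge_mod //; last by lia.
rewrite /Q; case: (ltnP i n) => Hin.
-   have -> : i <= n by lia.
  congr (_ %% _); lia.
- have Ei : i = n by lia.
  subst i; rewrite leqnn subnn.
  have -> : (n.-1).+1 + 1 = 1 + n by lia.
  by apply: addmod_dvd.
Qed.
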